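(* Let $z\in\mathbb{R}^n$ be a unit vector and $H$ a real symmetric $n\times n$ matrix, and set $H_+=(I-zz^T)H(I-zz^T)+zz^T$. Then $\operatorname{trace}\big((H_+-I)(H_+-H)\big)=0$; consequently $$\|(H-I)z\|^2\le \|H-I\|^2-\|H_+-I\|^2;$$ and furthermore $\lambda_{\min}(H_+)\ge\min\{\lambda_{\min}(H),1\}$.
   Context: For vectors, $\|\cdot\|$ is the Euclidean norm; for symmetric matrices, $\|\cdot\|$ is the norm induced by the inner product $\langle X,Y\rangle=\operatorname{trace}(XY)$ (the Frobenius norm). $\lambda_{\min}(H)$ denotes the smallest eigenvalue of $H$. *)

(* Defs.v *)
From HB Require Import structures.
From mathcomp Require Import all_boot all_order all_algebra.
From mathcomp Require Import classical_sets reals.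
Set Implicit Arguments. Unset Strict Implicit. Unset Printing Implicit Defensive.
Import Order.TTheory GRing.Theory Num.Theory.
Local Open Scope ring_scope.

Definition vnorm (R : realType) (n : nat) (v : 'cV[R]_n) : R :=
  Num.sqrt (\sum_(i < n) v i 0 ^+ 2).

Definition minner (R : realType) (n : nat) (X Y : 'M[R]_n) : R := \tr (X *m Y).
Definition mnorm (R : realType) (n : nat) (X : 'M[R]_n) : R :=
  Num.sqrt (minner X X).

Definition lambda_min (R : realType) (n : nat) (H : 'M[R]_n) : R :=
  inf [set a : R | eigenvalue H a].

Definition Hplus (R : realType) (n : nat) (z : 'cV[R]_n) (H : 'M[R]_n) : 'M[R]_n :=
  (1%:M - z *m z^T) *m H *m (1%:M - z *m z^T) + z *m z^T.

(* Main.v *)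
Require Import Defs.
From HB Require Import structures.
From mathcomp Require Import all_boot all_order all_algebra.
From mathcomp Require Import classical_sets reals.
From mathcomp Require Import ring lra.
Import Order.TTheory GRing.Theory Num.Theory.
Local Open Scope ring_scope.
Set Implicit Arguments. Unset Strict Implicit. Unset Printing Implicit Defensive.

Section Aux.
Variable R : realType.

Definition dot n (u v : 'cV[R]_n) : R := \sum_i u i 0 * v i 0.

Lemma dotE n (u v : 'cV[R]_n) : (u^T *m v) 0 0 = dot u v.
Proof. by rewrite mxE; apply: eq_bigr => i _; rewrite mxE. Qed.

Lemma dotM n (u v : 'cV[R]_n) : u^T *m v = (dot u v)%:M.
Proof. by apply/matrixP => i j; rewrite !ord1 -dotE [RHS]mxE eqxx mulr1n. Qed.

Lemma dotC n (u v : 'cV[R]_n) : dot u v = dot v u.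
Proof. by apply: eq_bigr => i _; rewrite mulrC. Qed.

Lemma dot_mul n (u v : 'cV[R]_n) (M : 'M[R]_n) : dot u (M *m v) = dot (M^T *m u) v.
Proof. by rewrite -!dotE trmx_mul trmxK mulmxA. Qed.

Lemma dotDl n (u w v : 'cV[R]_n) : dot (u + w) v = dot u v + dot w v.
Proof. by rewrite /dot -big_split; apply: eq_bigr => i _; rewrite mxE mulrDl. Qed.

Lemma dotZl n (u v : 'cV[R]_n) a : dot (a *: u) v = a * dot u v.
Proof. by rewrite /dot mulr_sumr; apply: eq_bigr => i _; rewrite mxE mulrA. Qed.

Lemma dotDr n (u w v : 'cV[R]_n) : dot v (u + w) = dot v u + dot v w.
Proof. by rewrite dotC dotDl !(dotC v). Qed.

Lemma dotZr n (u v : 'cV[R]_n) a : dot v (a *: u) = a * dot v u.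
Proof. by rewrite dotC dotZl dotC. Qed.

Lemma dot0l n (v : 'cV[R]_n) : dot 0 v = 0.
Proof. by rewrite /dot big1 // => i _; rewrite mxE mul0r. Qed.

Lemma dot_ge0 n (v : 'cV[R]_n) : 0 <= dot v v.
Proof. by apply: sumr_ge0 => i _; rewrite -expr2 sqr_ge0. Qed.

Lemma dot_eq0 n (v : 'cV[R]_n) : dot v v = 0 -> v = 0.
Proof.
move=> /eqP; rewrite psumr_eq0 => [/allP H|i _]; last by rewrite -expr2 sqr_ge0.
apply/matrixP => i j; rewrite ord1 mxE.
by have := H i (mem_index_enum _); rewrite -expr2 sqrf_eq0 => /eqP.
Qed.

Lemma dot_gt0 n (v : 'cV[R]_n) : v != 0 -> 0 < dot v v.
Proof.
move=> hv; rewrite lt_def dot_ge0 andbT; apply/eqP => /dot_eq0 h.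
by rewrite h eqxx in hv.
Qed.

Lemma coord_le n (v : 'cV[R]_n) i : v i 0 ^+ 2 <= dot v v.
Proof.
rewrite /dot (bigD1 i) //= -expr2 lerDl; apply: sumr_ge0 => j _.
by rewrite -expr2 sqr_ge0.
Qed.

Lemma quad_disc (a b c : R) : (forall t, 0 <= a + 2 * t * b + t ^+ 2 * c) ->
  0 <= c -> b ^+ 2 <= a * c.
Proof.
move=> H hc; have ha := H 0.
rewrite le_eqVlt in hc; case/orP: hc => [/eqP c0|cpos].
  rewrite -c0 mulr0; have [->|b0] := eqVneq b 0; first by rewrite expr2 mulr0.
  have := H (- (a + 1) / (2 * b)); rewrite -c0 mulr0 addr0.
  have -> : 2 * (- (a + 1) / (2 * b)) * b = - (a + 1).
    by field.
  lra.
have := H (- b / c).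
have e : (- b / c) * c = - b by field; rewrite gt_eqF.
nra.
Qed.


Lemma CS n (A : 'M[R]_n) : A^T = A -> (forall x, 0 <= dot x (A *m x)) ->
  forall x y, dot x (A *m y) ^+ 2 <= dot x (A *m x) * dot y (A *m y).
Proof.
move=> hA hpsd x y; apply: quad_disc; last exact: hpsd.
move=> t; have := hpsd (x + t *: y).
rewrite mulmxDr -scalemxAr !dotDl !dotDr !dotZl !dotZr.
have -> : dot y (A *m x) = dot x (A *m y) by rewrite dot_mul hA dotC.
by move=> h; apply: le_trans h _; rewrite le_eqVlt; apply/orP; left; apply/eqP; ring.
Qed.

Lemma dot_bound n (B : 'M[R]_n) (v : 'cV[R]_n) :
  `|dot v (B *m v)| <= (2 * \sum_i \sum_j `|B i j|) * dot v v.
Proof.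
have -> : dot v (B *m v) = \sum_i \sum_j B i j * (v i 0 * v j 0).
  rewrite /dot; apply: eq_bigr => i _; rewrite mxE mulr_sumr; apply: eq_bigr => j _.
  by rewrite mulrCA.
rewrite (mulrC 2) -mulrA mulr_suml; apply: le_trans (ler_norm_sum _ _ _) _.
apply: ler_sum => i _; rewrite mulr_suml; apply: le_trans (ler_norm_sum _ _ _) _.
apply: ler_sum => j _; rewrite normrM ler_wpM2l //.
have hi := coord_le v i; have hj := coord_le v j.
rewrite normrM; have := normr_ge0 (v i 0); have := normr_ge0 (v j 0).
rewrite -(real_normK (num_real (v i 0))) in hi.
rewrite -(real_normK (num_real (v j 0))) in hj.
nra.
Qed.


Lemma eigvec n (S : 'M[R]_n) l : S^T = S -> eigenvalue S l ->
  exists v : 'cV[R]_n, v != 0 /\ S *m v = l *: v.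
Proof.
move=> hS /eigenvalueP [w hw w0]; exists w^T; split.
  by apply: contra w0 => /eqP h; rewrite -[w]trmxK h trmx0.
by rewrite -{1}hS -trmx_mul hw linearZ.
Qed.

Lemma eig_ge n (S : 'M[R]_n) l0 l : S^T = S ->
  (forall v, l0 * dot v v <= dot v (S *m v)) -> eigenvalue S l -> l0 <= l.
Proof.
move=> hS hl /(eigvec hS) [v [v0 hv]]; have := hl v; rewrite hv dotZr.
by rewrite ler_pM2r // dot_gt0.
Qed.

Local Open Scope classical_set_scope.

Lemma min_eig n (S : 'M[R]_n) : (0 < n)%N -> S^T = S ->
  exists l, eigenvalue S l /\ forall v, l * dot v v <= dot v (S *m v).
Proof.
move=> n0 hS.
pose Q := [set r : R | exists v : 'cV[R]_n, v != 0 /\ r = dot v (S *m v) / dot v v].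
pose v0 : 'cV[R]_n := const_mx 1.
have v00 : v0 != 0.
  apply/eqP => /matrixP /(_ (Ordinal n0) 0); rewrite !mxE => /eqP; by rewrite oner_eq0.
have Qne : Q !=set0 by exists (dot v0 (S *m v0) / dot v0 v0), v0.
have Qlb : has_lbound Q.
  exists (- (2 * \sum_i \sum_j `|S i j|)) => r [v [vn0 ->]].
  rewrite ler_pdivlMr ?dot_gt0 // mulNr lerNl.
  by apply: le_trans (dot_bound S v); rewrite -normrN ler_norm.
pose m := inf Q.
have hm : forall v, m * dot v v <= dot v (S *m v).
  move=> v; have [->|vn0] := eqVneq v 0.
    by rewrite !dot0l mulr0.
  rewrite -ler_pdivlMr ?dot_gt0 //; apply: ge_inf => //; by exists v.
exists m; split => //.
rewrite /eigenvalue /eigenspace kermx_eq0 row_free_unit; apply/negP => hU.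
pose A := S - m%:M.
have hA : A^T = A by rewrite /A linearB /= tr_scalar_mx hS.
have qA : forall x, dot x (A *m x) = dot x (S *m x) - m * dot x x.
  by move=> x; rewrite /A mulmxBl mul_scalar_mx dotDr -scaleNr dotZr mulNr.
have psd : forall x, 0 <= dot x (A *m x) by move=> x; rewrite qA subr_ge0.
pose B := invmx A.
pose c := 2 * \sum_i \sum_j `|B i j|.
have key : forall v, v != 0 -> dot v v <= dot v (A *m v) * c.
  move=> v vn0; have dpos := dot_gt0 vn0.
  have h1 := CS hA psd v (B *m v).
  have e1 : A *m (B *m v) = v by rewrite mulmxA mulmxV // mul1mx.
  rewrite e1 (dotC (B *m v)) in h1.
  have h2 := dot_bound B v.
  have h3 : dot v (B *m v) <= c * dot v v by apply: le_trans (ler_norm _) h2.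
  have h4 := psd v.
  have : dot v v ^+ 2 <= dot v (A *m v) * (c * dot v v).
    apply: le_trans h1 _; apply: ler_wpM2l => //.
  rewrite expr2 mulrA ler_pM2r //.
have cpos : 0 < c.
  have := key v0 v00; have := dot_gt0 v00; have := psd v0.
  move=> h4 h5 h6; rewrite ltNge; apply/negP => cle.
  have : dot v0 (A *m v0) * c <= 0 by rewrite mulr_ge0_le0.
  lra.
have : m + c^-1 <= m.
  apply: lb_le_inf => // r [v [vn0 ->]].
  rewrite ler_pdivlMr ?dot_gt0 //.
  have := key v vn0; rewrite qA => h.
  have dpos := dot_gt0 vn0.
  rewrite mulrDl -subr_ge0.
  have : dot v v * c^-1 <= dot v (S *m v) - m * dot v v.
    by rewrite ler_pdivrMr.
  lra.
have : 0 < c^-1 by rewrite invr_gt0.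
lra.
Qed.


Lemma vnorm_sq n (v : 'cV[R]_n) : vnorm v ^+ 2 = dot v v.
Proof.
rewrite /vnorm sqr_sqrtr; last by apply: sumr_ge0 => i _; rewrite sqr_ge0.
by apply: eq_bigr => i _; rewrite expr2.
Qed.

Lemma tr_outer n (u v : 'cV[R]_n) : \tr (u *m v^T) = dot u v.
Proof. by apply: eq_bigr => i _; rewrite mxE big_ord1 mxE. Qed.

Lemma mnorm_sq n (X : 'M[R]_n) : X^T = X -> mnorm X ^+ 2 = \tr (X *m X).
Proof.
move=> hX; rewrite /mnorm /minner sqr_sqrtr //.
rewrite -{1}hX; apply: sumr_ge0 => i _; rewrite mxE; apply: sumr_ge0 => j _.
by rewrite mxE -expr2 sqr_ge0.
Qed.

End Aux.

Theorem mainTheorem3 (R : realType) (n : nat) (z : 'cV[R]_n) (H : 'M[R]_n)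
  (hz : vnorm z = 1) (hH : H^T = H) :
  \tr ((Hplus z H - 1%:M) *m (Hplus z H - H)) = 0
  /\ vnorm ((H - 1%:M) *m z) ^+ 2 <= mnorm (H - 1%:M) ^+ 2 - mnorm (Hplus z H - 1%:M) ^+ 2
  /\ Num.min (lambda_min H) 1 <= lambda_min (Hplus z H).
Proof.
have dzz : dot z z = 1 by rewrite -vnorm_sq hz expr1n.
have hzz : z^T *m z = 1%:M by rewrite dotM dzz.
pose Q := z *m z^T; pose P := 1%:M - Q.
have hP : Hplus z H = P *m H *m P + Q by [].
have hNP : - P = Q - 1%:M by rewrite /P opprB.
have hQ : Q = z *m z^T by [].
have hPQ : P = 1%:M - Q by [].
clearbody P Q.
have QQ : Q *m Q = Q by rewrite hQ mulmxA -(mulmxA z) hzz mulmx1.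
have PQ : P *m Q = 0 by rewrite hPQ mulmxBl mul1mx QQ subrr.
have QP : Q *m P = 0 by rewrite hPQ mulmxBr mulmx1 QQ subrr.
have PP : P *m P = P by rewrite {1}hPQ mulmxBl mul1mx QP subr0.
have PT : P^T = P by rewrite hPQ hQ linearB /= trmx1 trmx_mul trmxK.
have Pz : P *m z = 0 by rewrite hPQ hQ mulmxBl mul1mx -mulmxA hzz mulmx1 subrr.
have zP : z^T *m P = 0 by rewrite -PT -trmx_mul Pz trmx0.
pose A := H - 1%:M.
have hAd : H - 1%:M = A by [].
clearbody A.
have hA : A^T = A by rewrite -hAd linearB /= trmx1 hH.
have hHp1 : Hplus z H - 1%:M = P *m A *m P.
  by rewrite -hAd mulmxBr mulmx1 mulmxBl PP hP -addrA -hNP.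
rewrite hAd.
split.
  rewrite hHp1 hP mulmxBr mulmxDr !mxtraceD raddfN /=.
  rewrite -(mulmxA _ P Q) PQ mulmx0 mxtrace0 addr0.
  have -> : P *m A *m P *m (P *m H *m P) = (P *m A *m P *m H) *m P.
    by rewrite !mulmxA -(mulmxA _ P P) PP.
  by rewrite mxtrace_mulC !mulmxA PP subrr.
split.
  have hsym : (P *m A *m P)^T = P *m A *m P by rewrite !trmx_mul PT hA mulmxA.
  rewrite vnorm_sq mnorm_sq // hHp1 mnorm_sq //.
  have -> : \tr (P *m A *m P *m (P *m A *m P)) = \tr (P *m A *m P *m A).
    rewrite !mulmxA -(mulmxA _ P P) PP mxtrace_mulC !mulmxA PP //.
  pose a := A *m z.
  have QA : Q *m A = z *m a^T by rewrite hQ -mulmxA /a trmx_mul hA.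
  have AQ : A *m Q = a *m z^T by rewrite hQ mulmxA.
  have e1 : \tr (Q *m A *m A) = dot a a.
    by rewrite QA -mulmxA -[a^T *m A]trmxK trmx_mul trmxK hA tr_outer dot_mul hA.
  have e2 : \tr (A *m Q *m A) = dot a a.
    by rewrite -mulmxA mxtrace_mulC e1.
  have e3 : \tr (Q *m A *m Q *m A) = dot z a ^+ 2.
    by rewrite -mulmxA QA mulmxA -(mulmxA z (a^T) z) dotM -mulmxA mul_scalar_mx -scalemxAr mxtraceZ tr_outer (dotC a) expr2.

  have e4 : \tr (P *m A *m P *m A) = \tr (A *m A) - \tr (Q *m A *m A) - \tr (A *m Q *m A) + \tr (Q *m A *m Q *m A).
    rewrite hPQ !mulmxBl !mul1mx !mulmxBr !mulmx1 !mulmxBl !mxtraceD !raddfN /= raddfB /=; ring.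
  have psd1 : forall x : 'cV[R]_n, 0 <= dot x (1%:M *m x) by move=> x; rewrite mul1mx dot_ge0.
  have cs := @CS R n 1%:M (trmx1 _ _) psd1 z a.
  rewrite !mul1mx dzz mul1r in cs.
  rewrite e4 e1 e2 e3 -/a.
  lra.
have n0 : (0 < n)%N.
  rewrite lt0n; apply/eqP => n0.
  have : dot z z = 0.
    by rewrite /dot big1 // => i; have := ltn_ord i; rewrite {2}n0.
  by rewrite dzz; move/eqP; rewrite oner_eq0.
have hHpT : (Hplus z H)^T = Hplus z H.
  by rewrite hP linearD /= !trmx_mul PT hH hQ trmx_mul trmxK mulmxA.
have [l0 [eH hl0]] := min_eig n0 hH.
have lmH : lambda_min H <= l0.
  rewrite /lambda_min; apply: (ge_inf _ eH).
  by exists l0 => y /= /(eig_ge hH hl0).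
have [l1 [eHp _]] := min_eig n0 hHpT.
rewrite {2}/lambda_min; apply: lb_le_inf; first by exists l1.
move=> mu /= emu.
have [v [v0 hv]] := eigvec hHpT emu.
have Hpz : Hplus z H *m z = z.
  by rewrite hP mulmxDl -(mulmxA (P *m H) P z) Pz mulmx0 add0r hQ -mulmxA hzz mulmx1.
have hzv : dot z v = mu * dot z v.
  by rewrite -dotZr -hv dot_mul hHpT Hpz.
rewrite ge_min; have [->|mu1] := eqVneq mu 1; first by rewrite lexx orbT.
have dzv : dot z v = 0.
  have : (mu - 1) * dot z v = 0 by rewrite mulrBl -hzv mul1r subrr.
  by move/eqP; rewrite mulf_eq0 subr_eq0 (negbTE mu1) /= => /eqP.
have Qv : Q *m v = 0 by rewrite hQ -mulmxA dotM dzv mul_mx_scalar scale0r.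
have Pv : P *m v = v by rewrite hPQ mulmxBl mul1mx Qv subr0.
have e5 : dot v (Hplus z H *m v) = dot v (H *m v).
  by rewrite hP mulmxDl Qv addr0 -(mulmxA (P *m H) P v) Pv -mulmxA (dot_mul v (H *m v)) PT Pv.
have := hl0 v; rewrite -e5 hv dotZr ler_pM2r ?dot_gt0 // => h.
by rewrite (le_trans lmH h).
Qed.
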